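(* Let $s,t\in\mathbb{R}$ with $s\ne0$, $s^2+4t>0$, and $q=\varphi'_{s,t}/\varphi_{s,t}\ne1$. Let $p$ be a $q$-periodic function, i.e. $p(qy)=p(y)$ for all $y$ in its domain (in the paper $p(x)=G(\log_q(x))$ with $G$ periodic of period one). Let $0\le a<b$ and let $f$ be $(s,t)$-integrable on $[0,r]$ for $r\in\{a,b\}$ and continuous at $0$. Then $$\int_a^b p(x)f(x)\,d_{s,t}x=p\!\left(\frac{b}{\varphi_{s,t}}\right)\int_0^b f(x)\,d_{s,t}x-p\!\left(\frac{a}{\varphi_{s,t}}\right)\int_0^a f(x)\,d_{s,t}x,$$ where for $a=0$ the second term is interpreted as $0$.
   Context: $\varphi_{s,t}=\frac{s+\sqrt{s^2+4t}}{2}$, $\varphi'_{s,t}=\frac{s-\sqrt{s^2+4t}}{2}$. If $0<\lvert q\rvert<1$, $\int_a^b f(x)\,d_{s,t}x=(1-q)\sum_{n=0}^\infty\big[bf(bq^n/\varphi_{s,t})-af(aq^n/\varphi_{s,t})\big]q^n$; if $\lvert q\rvert>1$, $\int_a^b f(x)\,d_{s,t}x=(1-q)\sum_{n=0}^\infty\big[bf(bq^{-n}/\varphi'_{s,t})-af(aq^{-n}/\varphi'_{s,t})\big]q^{-n}$. In particular $\int_0^r f\,d_{s,t}x$ is the corresponding series with only the $r$-terms. ''$(s,t)$-integrable on $[0,r]$'' means this series converges. *)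

(* Defs.v *)
From Stdlib Require Import Reals.
From Coquelicot Require Import Coquelicot.
Open Scope R_scope.

Definition phi (s t : R) : R := (s + sqrt (s ^ 2 + 4 * t)) / 2.
Definition phi' (s t : R) : R := (s - sqrt (s ^ 2 + 4 * t)) / 2.
Definition qst (s t : R) : R := phi' s t / phi s t.

Definition st_integral (s t : R) (f : R -> R) (a b : R) : R :=
  let q := qst s t in
  if Rlt_dec (Rabs q) 1 then
    (1 - q) * Series (fun n => (b * f (b * q ^ n / phi s t)
                                - a * f (a * q ^ n / phi s t)) * q ^ n)
  else
    (1 - q) * Series (fun n => (b * f (b * (/ q) ^ n / phi' s t)
                                - a * f (a * (/ q) ^ n / phi' s t)) * (/ q) ^ n).

Definition st_integral0 (s t : R) (f : R -> R) (r : R) : R :=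
  let q := qst s t in
  if Rlt_dec (Rabs q) 1 then
    (1 - q) * Series (fun n => r * f (r * q ^ n / phi s t) * q ^ n)
  else
    (1 - q) * Series (fun n => r * f (r * (/ q) ^ n / phi' s t) * (/ q) ^ n).

Definition st_integrable0 (s t : R) (f : R -> R) (r : R) : Prop :=
  let q := qst s t in
  if Rlt_dec (Rabs q) 1 then
    ex_series (fun n => r * f (r * q ^ n / phi s t) * q ^ n)
  else
    ex_series (fun n => r * f (r * (/ q) ^ n / phi' s t) * (/ q) ^ n).

(* Main.v *)
Require Import Defs.
From Stdlib Require Import Reals Lra.
From Coquelicot Require Import Coquelicot.
Open Scope R_scope.

Theorem mainTheorem5 (s t : R) (p f : R -> R) (a b : R)
  (hs : s <> 0) (hd : s ^ 2 + 4 * t > 0)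
  (hq1 : qst s t <> 1) (hq0 : qst s t <> 0)
  (hp : forall y : R, p (qst s t * y) = p y)
  (ha : 0 <= a) (hab : a < b)
  (hia : st_integrable0 s t f a) (hib : st_integrable0 s t f b)
  (hc : continuous f 0) :
  st_integral s t (fun x => p x * f x) a b =
    p (b / phi s t) * st_integral0 s t f b
    - p (a / phi s t) * st_integral0 s t f a.
Proof.
  unfold st_integral, st_integral0, st_integrable0 in *.
  set (q := qst s t) in *.
  assert (hphi : phi s t <> 0).
  { intro H. apply hq0. unfold q, qst. rewrite H. unfold Rdiv. rewrite Rinv_0. ring. }
  assert (hphi' : phi' s t = q * phi s t).
  { unfold q, qst. field. exact hphi. }
  assert (P1 : forall n y, p (q ^ n * y) = p y).
  { induction n; intro y; simpl. f_equal; ring.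
    rewrite Rmult_assoc, hp. apply IHn. }
  assert (P2 : forall n y, p ((/ q) ^ n * y) = p y).
  { induction n; intro y; simpl. f_equal; ring.
    rewrite <- (hp (/ q * (/ q) ^ n * y)).
    replace (q * (/ q * (/ q) ^ n * y)) with ((/q)^n * y) by (field; exact hq0).
    apply IHn. }
  destruct (Rlt_dec (Rabs q) 1) as [Hl|Hl].
  - rewrite (Series_ext _ (fun n => p (b / phi s t) * (b * f (b * q ^ n / phi s t) * q ^ n)
                            - p (a / phi s t) * (a * f (a * q ^ n / phi s t) * q ^ n))).
    2:{ intro n. replace (b * q ^ n / phi s t) with (q ^ n * (b / phi s t)) by (field; exact hphi).
        replace (a * q ^ n / phi s t) with (q ^ n * (a / phi s t)) by (field; exact hphi).
        rewrite !P1. ring. }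
    rewrite Series_minus, !Series_scal_l. ring.
    exact (ex_series_scal_l _ _ hib).
    exact (ex_series_scal_l _ _ hia).
  - rewrite (Series_ext _ (fun n => p (b / phi s t) * (b * f (b * (/ q) ^ n / phi' s t) * (/ q) ^ n)
                            - p (a / phi s t) * (a * f (a * (/ q) ^ n / phi' s t) * (/ q) ^ n))).
    2:{ intro n.
        replace (b * (/ q) ^ n / phi' s t) with ((/ q) ^ (S n) * (b / phi s t))
          by (rewrite hphi'; simpl; field; split; assumption).
        replace (a * (/ q) ^ n / phi' s t) with ((/ q) ^ (S n) * (a / phi s t))
          by (rewrite hphi'; simpl; field; split; assumption).
        rewrite !P2. ring. }
    rewrite Series_minus, !Series_scal_l. ring.
    exact (ex_series_scal_l _ _ hib).
    exact (ex_series_scal_l _ _ hia).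
Qed.
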